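(* Assume the setup of the context and let $t\in\mathbb{R}$ be proper, with $A+tB=u(x,y;t)\prod_{j=1}^M(y+q_j(x)+x^{2L_j}\psi_j(x;t))$ as in the definition of proper. Then for each $j=1,\dots,M$, $$\mathrm{Ord}\bigl(B(x,-q_j(x)-x^{2L_j}\psi_j(x;t))\bigr)=\sum_{i=1}^MO_{ij}=2L_j+\sum_{i\ne j}O_{ij},$$ $$\mathrm{Ord}\bigl((A_y+tB_y)(x,-q_j(x)-x^{2L_j}\psi_j(x;t))\bigr)=\sum_{i\neq j}O_{ij}.$$
   Context: Setup: $P\in\mathbb{C}[x,y]$ has no zeros in $\mathbb{R}\times\mathbb{H}$ ($\mathbb{H}=\{\operatorname{Im}z>0\}$), no factors in common with $\bar P(x,y)=\overline{P(\bar x,\bar y)}$, $M=\mathrm{Ord}(P(0,y))$, and the coefficient of $y^M$ in $P(0,y)$ is real. Locally $P=u\prod_{j=1}^M(y+q_j(x)+x^{2L_j}\psi_j(x^{1/k}))$ with $u$ a unit, $k\ge1$, $L_j\in\mathbb{N}$, $q_j\in\mathbb{R}[x]$, $q_j(0)=0$, $\deg q_j<2L_j$, $\psi_j\in\mathbb{C}\{x\}$, $\operatorname{Im}\psi_j(0)>0$. $A=\tfrac12(P+\bar P)$, $B=\tfrac1{2i}(P-\bar P)$, subscripts $y$ denote $\partial/\partial y$. $O_{ij}=\min\{\mathrm{Ord}(q_j-q_i),2L_j,2L_i\}$, Ord = order of vanishing at $0$. A real $t$ is called proper if there is a local factorization $A+tB=u(x,y;t)\prod_{j=1}^M(y+q_j(x)+x^{2L_j}\psi_j(x;t))$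 with $u(\cdot,\cdot;t)$ a unit in $\mathbb{C}\{x,y\}$, $\psi_j(\cdot;t)\in\mathbb{R}\{x\}$, and $\mathrm{Ord}(q_j-q_i+x^{2L_j}\psi_j(x;t)-x^{2L_i}\psi_i(x;t))=O_{ij}$ for all $i\ne j$ (all but finitely many $t$ are proper). *)

(* Defs.v *)
From HB Require Import structures.
From mathcomp Require Import all_boot all_order all_algebra.
From mathcomp Require Import reals complex.
Set Implicit Arguments. Unset Strict Implicit. Unset Printing Implicit Defensive.
Import Order.TTheory GRing.Theory Num.Theory.
Local Open Scope ring_scope.

Section Defs.
Variable R : realType.
Local Notation C := R[i].

(* a : nat -> C stands for  sum_m a m x^m. *)

Definition conv1 (a : nat -> C) : Prop :=
  exists r : R, 0 < r /\ exists K : R, forall m, `|a m| * ((r ^+ m)%:C)%C <= (K%:C)%C.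

Definition conv1R (a : nat -> R) : Prop :=
  exists r : R, 0 < r /\ exists K : R, forall m, `|a m| * r ^+ m <= K.

Definition ord_eq (a : nat -> C) (n : nat) : Prop :=
  a n != 0 /\ forall m, (m < n)%N -> a m = 0.

Definition ser_of_poly (p : {poly C}) : nat -> C := fun m => p`_m.
Definition ser_of_real (a : nat -> R) : nat -> C := fun m => ((a m)%:C)%C.
Definition sadd (a b : nat -> C) : nat -> C := fun m => a m + b m.
Definition sopp (a : nat -> C) : nat -> C := fun m => - a m.
Definition smul (a b : nat -> C) : nat -> C :=
  fun m => \sum_(i < m.+1) a i * b (m - i)%N.
Definition sone : nat -> C := fun m => (m == 0%N)%:R.
Definition spow (a : nat -> C) (n : nat) : nat -> C := iter n (smul a) sone.
(* x^e * a(x) *)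
Definition sshift (e : nat) (a : nat -> C) : nat -> C :=
  fun m => if (e <= m)%N then a (m - e)%N else 0.

(* ---------- bivariate polynomials: P : {poly {poly C}}, outer variable y,
   inner variable x, i.e. P = sum_n (P`_n)(x) y^n ---------- *)

Definition peval2 (P : {poly {poly C}}) (x y : C) : C :=
  (map_poly (fun c : {poly C} => c.[x]) P).[y].

(* Pbar(x,y) = conj (P (conj x, conj y)) : conjugate all coefficients *)
Definition pconj2 (P : {poly {poly C}}) : {poly {poly C}} :=
  map_poly (map_poly (fun z : C => (z^*)%C)) P.

Definition pat0 (P : {poly {poly C}}) : {poly C} :=
  map_poly (fun c : {poly C} => c.[0]) P.

Definition pdivides2 (Q P : {poly {poly C}}) : Prop := exists S, P = Q * S.
Definition pconst2 (Q : {poly {poly C}}) : Prop := exists c : C, Q = c%:P%:P.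

Definition Apart (P : {poly {poly C}}) : {poly {poly C}} :=
  ((2%:R)^-1 : C)%:P%:P * (P + pconj2 P).
Definition Bpart (P : {poly {poly C}}) : {poly {poly C}} :=
  ((2%:R * 'i%C)^-1 : C)%:P%:P * (P - pconj2 P).

(* P(x, s(x)) as a power series in x, for a power series s *)
Definition peval_ser (P : {poly {poly C}}) (s : nat -> C) : nat -> C :=
  fun m => \sum_(n < size P) smul (ser_of_poly P`_n) (spow s n) m.

(* ---------- bivariate power series: a m n = coefficient of x^m y^n ---------- *)
Definition conv2 (a : nat -> nat -> C) : Prop :=
  exists r : R, 0 < r /\ exists K : R, forall m n, `|a m n| * ((r ^+ (m + n))%:C)%C <= (K%:C)%C.

Definition bser_of_poly (P : {poly {poly C}}) : nat -> nat -> C :=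
  fun m n => (P`_n)`_m.
Definition bmul (a b : nat -> nat -> C) : nat -> nat -> C :=
  fun m n => \sum_(i < m.+1) \sum_(j < n.+1) a i j * b (m - i)%N (n - j)%N.
Definition bone : nat -> nat -> C := fun m n => ((m == 0%N) && (n == 0%N))%:R.
(* the bivariate series  y + c(x) *)
Definition bfactor (c : nat -> C) : nat -> nat -> C :=
  fun m n => if n == 1%N then (m == 0%N)%:R else if n == 0%N then c m else 0.
(* a(x^k, y) as a series in (x, y) *)
Definition bsubst (k : nat) (a : nat -> nat -> C) : nat -> nat -> C :=
  fun m n => if (k %| m)%N then a (m %/ k)%N n else 0.
Definition ssubst (k : nat) (a : nat -> C) : nat -> C :=
  fun m => if (k %| m)%N then a (m %/ k)%N else 0.

Definition pord (p : {poly R}) : nat := find (fun c => c != 0) p.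
(* O_ij = min { Ord(q_j - q_i), 2 L_j, 2 L_i }, with Ord 0 = +oo *)
Definition Onum (qi qj : {poly R}) (Li Lj : nat) : nat :=
  if qj - qi == 0 then minn (2 * Lj) (2 * Li)
  else minn (pord (qj - qi)) (minn (2 * Lj) (2 * Li)).

End Defs.

(* Main.v *)
Require Import Defs.
From HB Require Import structures.
From mathcomp Require Import all_boot all_order all_algebra.
From mathcomp Require Import reals complex.
From mathcomp Require Import zify ring.
Import Order.TTheory GRing.Theory Num.Theory.
Local Open Scope ring_scope.

Set Implicit Arguments. Unset Strict Implicit. Unset Printing Implicit Defensive.

Section Aux.
Variable R : realType.
Local Notation C := R[i].
Local Notation bip := {poly {poly C}}.

Definition trunc (N : nat) (a : nat -> C) : {poly C} := \poly_(i < N) a i.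
Definition BT (N : nat) (a : nat -> nat -> C) : bip :=
  \poly_(n < N) \poly_(m < N) a m n.
Definition approx N (a : nat -> nat -> C) (Q : bip) :=
  forall m n, (m < N)%N -> (n < N)%N -> a m n = (Q`_n)`_m.
Definition ordp (p : {poly C}) (n : nat) :=
  p`_n != 0 /\ forall m, (m < n)%N -> p`_m = 0.

Lemma approx_bmul N a b P1 Q1 : approx N a P1 -> approx N b Q1 ->
  approx N (bmul a b) (P1 * Q1).
Proof.
move=> ha hb m n hm hn; rewrite /bmul coefM coef_sum exchange_big /=.
apply: eq_bigr => j _; rewrite coefM; apply: eq_bigr => i _.
have hi := ltn_ord i; have hj := ltn_ord j.
rewrite ha ?hb //; lia.
Qed.

Lemma approx_bone N : approx N (@bone R) 1.
Proof.
move=> m n _ _; rewrite /bone coef1.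
by case: (n == 0%N); rewrite ?coef1 ?coef0 ?andbT ?andbF.
Qed.

Lemma approx_BT N a : approx N a (BT N a).
Proof. by move=> m n hm hn; rewrite coef_poly hn coef_poly hm. Qed.

Lemma approx_bfactor N c : approx N (bfactor c) ('X + (trunc N c)%:P).
Proof.
move=> m n hm hn; rewrite /bfactor coefD coefX coefC.
case: n hn => [|[|n]] hn /=.
- by rewrite add0r coef_poly hm.
- by rewrite addr0 coef1.
- by rewrite addr0 coef0.
Qed.




Lemma approx_big N (I : finType) (F : I -> nat -> nat -> C) (G : I -> bip) :
  (forall i, approx N (F i) (G i)) ->
  approx N (\big[@bmul R/@bone R]_i F i) (\prod_i G i).
Proof.
move=> h; apply: (big_ind2 (approx N)); first exact: approx_bone.
  by move=> ? ? ? ?; apply: approx_bmul.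
by move=> i _; apply: h.
Qed.

Lemma pow_low (Y : {poly C}) : Y`_0 = 0 -> forall n m, (m < n)%N -> (Y ^+ n)`_m = 0.
Proof.
move=> h0 n m hmn.
have hY : Y = drop_poly 1 Y * 'X.
  rewrite -{1}(poly_take_drop 1 Y) expr1.
  suff -> : take_poly 1 Y = 0 by rewrite add0r.
  apply/polyP => i; rewrite coef_take_poly coef0; case: i => //.
rewrite hY exprMn coefMXn hmn //.
Qed.

Lemma eval_agree N (P1 P2 : bip) (Y : {poly C}) :
  (forall m n, (m < N)%N -> (n < N)%N -> (P1`_n)`_m = (P2`_n)`_m) ->
  Y`_0 = 0 -> forall m, (m < N)%N -> (P1.[Y])`_m = (P2.[Y])`_m.
Proof.
move=> hA hY m hm.
rewrite (@horner_coef_wide _ (maxn (size P1) (size P2)) P1 Y (leq_maxl _ _)).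
rewrite (@horner_coef_wide _ (maxn (size P1) (size P2)) P2 Y (leq_maxr _ _)).
rewrite !coef_sum; apply: eq_bigr => n _.
rewrite !coefM; apply: eq_bigr => i _.
have hi := ltn_ord i.
case: (ltnP n N) => hn.
  by rewrite hA //; lia.
rewrite pow_low ?mulr0 //; lia.
Qed.

Lemma spow_trunc N s n m : (m < N)%N -> spow s n m = ((trunc N s) ^+ n)`_m.
Proof.
elim: n m => [|n IH] m hm; first by rewrite expr0 coef1.
rewrite exprS coefM /spow iterS -/(spow s n) /smul.
apply: eq_bigr => i _; have hi := ltn_ord i.
rewrite coef_poly IH; last lia.
by have -> : (i < N)%N by lia.
Qed.

Lemma peval_eval N (Q : bip) s m : (m < N)%N ->
  peval_ser Q s m = (Q.[trunc N s])`_m.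
Proof.
move=> hm; rewrite /peval_ser horner_coef coef_sum; apply: eq_bigr => n _.
rewrite coefM /smul; apply: eq_bigr => i _.
by rewrite (@spow_trunc N) //; have := ltn_ord i; lia.
Qed.

Lemma ordpM (p q : {poly C}) a b : ordp p a -> ordp q b -> ordp (p * q) (a + b).
Proof.
move=> [pa pl] [qb ql]; split.
  have ha : (a < (a + b).+1)%N by lia.
  rewrite coefM (bigD1 (Ordinal ha)) //=.
  rewrite big1 ?addr0.
    by rewrite (_ : (a + b - a = b)%N); [rewrite mulf_neq0|lia].
  move=> i hi; have hia : (nat_of_ord i != a) by apply: contra hi => /eqP h; apply/eqP/val_inj.
  case: (ltnP i a) => h; first by rewrite pl ?mul0r.
  rewrite ql ?mulr0 //; have := ltn_ord i; lia.
move=> m hm; rewrite coefM big1 // => i _.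
case: (ltnP i a) => h; first by rewrite pl ?mul0r.
rewrite ql ?mulr0 //; have := ltn_ord i; lia.
Qed.

Lemma ordp1 : ordp 1 0.
Proof. by split => //; rewrite coef1 oner_neq0. Qed.

Lemma ordp_prod (I : finType) (Pr : pred I) (F : I -> {poly C}) (o : I -> nat) :
  (forall i, Pr i -> ordp (F i) (o i)) ->
  ordp (\prod_(i | Pr i) F i) (\sum_(i | Pr i) o i)%N.
Proof.
move=> h; apply: (big_ind2 ordp); first exact: ordp1.
  by move=> ? ? ? ?; apply: ordpM.
exact: h.
Qed.

Lemma ordp_eq N (p q : {poly C}) n : (n < N)%N -> (forall m, (m < N)%N -> p`_m = q`_m) ->
  ordp p n -> ordp q n.
Proof.
move=> hn h [h1 h2]; split; first by rewrite -h.
by move=> m hm; rewrite -h ?h2 //; lia.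
Qed.

End Aux.

Section Aux2.
Variable R : realType.
Local Notation C := R[i].
Local Notation bip := {poly {poly C}}.

Lemma comp_pow (Y Z : {poly C}) n : (Y ^+ n) \Po Z = (Y \Po Z) ^+ n.
Proof.
elim: n => [|n IH]; first by rewrite !expr0 -polyC1 comp_polyC.
by rewrite !exprS comp_polyM IH.
Qed.

Lemma comp_eval (P : bip) (Y : {poly C}) k :
  (map_poly (fun c => c \Po 'X^k) P).[Y \Po 'X^k] = P.[Y] \Po 'X^k.
Proof.
have hs : (size (map_poly (fun c => c \Po 'X^k) P) <= size P)%N.
  by rewrite /map_poly; apply: size_poly.
rewrite (horner_coef_wide _ hs) horner_coef.
have -> : forall (F : 'I_(size P) -> {poly C}), (\sum_i F i) \Po 'X^k = \sum_i (F i \Po 'X^k).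
  move=> F; apply: (big_morph (fun c => c \Po 'X^k)) => //.
  - by move=> x y; rewrite comp_polyD.
  - by rewrite comp_poly0.
apply: eq_bigr => i _.
by rewrite comp_polyM comp_pow coef_map_id0 // comp_poly0.
Qed.

Lemma ordp_comp (p : {poly C}) k n : (0 < k)%N -> ordp (p \Po 'X^k) (k * n) -> ordp p n.
Proof.
move=> hk [h1 h2]; split.
  by move: h1; rewrite coef_comp_poly_Xn // dvdn_mulr // mulKn.
move=> m hm; move: (h2 (k * m)%N); rewrite coef_comp_poly_Xn // dvdn_mulr // mulKn //.
apply; rewrite ltn_pmul2l //.
Qed.

Lemma ordpXc (c : C) : ordp ('X + c%:P) (c == 0).
Proof.
have [->|hc] := eqVneq c 0; split.
- by rewrite addr0 coefX oner_eq0.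
- by move=> m; case: m => //; rewrite addr0 coefX.
- by rewrite coefD coefX coefC add0r.
- by [].
Qed.

Lemma eval_coef0 (Q : bip) (Y : {poly C}) : Y`_0 = 0 -> (Q.[Y])`_0 = (Q`_0)`_0.
Proof.
move=> hY.
have := @eval_agree R 1 Q (Q`_0)%:P Y _ hY 0 (ltn0Sn 0).
rewrite hornerC; apply => m n; case: m => // _; case: n => // _.
by rewrite coefC.
Qed.

Lemma PAB (P : bip) : Apart P + ('i%C)%:P%:P * Bpart P = P.
Proof.
rewrite /Apart /Bpart mulrA -!polyCM.
have h2 : (2 : C) != 0 by rewrite pnatr_eq0.
have hi : ('i%C : C) != 0.
  by apply/eqP => /(congr1 (@complex.Im R)) /= /eqP; rewrite oner_eq0.
have -> : ('i%C : C) * (2%:R * 'i%C)^-1 = 2%:R^-1.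
  by rewrite invfM mulrCA divff // mulr1.
rewrite -mulrDr.
have e : ((2:C)^-1 *+ 2) = 1.
  by field.
rewrite addrACA subrr addr0 -mulr2n mulrnAr -mulrnAl -!polyCMn e.
by rewrite mul1r.
Qed.

End Aux2.

Section Aux3.
Variable R : realType.
Local Notation C := R[i].
Local Notation emb := (map_poly (fun a : R => (a%:C)%C)).

Lemma hemb (p : {poly R}) m : (emb p)`_m = ((p`_m)%:C)%C.
Proof. by rewrite coef_map_id0 // rmorph0. Qed.

Definition rr (qi qj : {poly R}) (Li Lj : nat) (pi pj : nat -> R) (a : nat) : R :=
  (qj - qi)`_a + (if (2 * Lj <= a)%N then pj (a - 2 * Lj)%N else 0)
   - (if (2 * Li <= a)%N then pi (a - 2 * Li)%N else 0).

Lemma series_r (qi qj : {poly R}) Li Lj (pi pj : nat -> R) a :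
  sadd (ser_of_poly (emb (qj - qi)))
       (sadd (sshift (2 * Lj) (ser_of_real pj)) (sopp (sshift (2 * Li) (ser_of_real pi)))) a
  = ((rr qi qj Li Lj pi pj a)%:C)%C.
Proof.
rewrite /sadd /sopp /sshift /ser_of_poly /ser_of_real /rr hemb.
rewrite !rmorphB rmorphD /=.
by case: ifP; case: ifP => _ _; rewrite ?rmorph0 addrA.
Qed.

Definition cxf (qi : {poly R}) (Li : nat) (pi : nat -> R) : nat -> C :=
  sadd (ser_of_poly (emb qi)) (sshift (2 * Li) (ser_of_real pi)).

Lemma cx_r (qi qj : {poly R}) Li Lj (pi pj : nat -> R) a :
  cxf qj Lj pj a - cxf qi Li pi a = ((rr qi qj Li Lj pi pj a)%:C)%C.
Proof.
rewrite /cxf /sadd /sshift /ser_of_poly /ser_of_real /rr !hemb coefB.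
rewrite !rmorphB rmorphD /=.
case: ifP; case: ifP => _ _; rewrite ?rmorph0; ring.
Qed.

Lemma rr_jj (qj : {poly R}) Lj pj a : rr qj qj Lj Lj pj pj a = 0.
Proof. by rewrite /rr subrr coef0 add0r subrr. Qed.

Lemma key_s (k N0 O Li : nat) (e : nat -> C) (r pt : nat -> R) (ps : nat -> C)
  (p : {poly C}) :
  (0 < k)%N -> (O <= 2 * Li)%N -> (O < N0)%N -> (forall a, (a < O)%N -> r a = 0) ->
  ((O < 2 * Li)%N -> r O != 0) -> 0 < complex.Im (ps 0%N) ->
  (forall m, (m < k * N0)%N -> p`_m =
     (if (k %| m)%N then - (((r (m %/ k)%N + (if (2 * Li <= m %/ k)%N then pt (m %/ k - 2 * Li)%N else 0))%:C)%C)
      else 0) + (if (2 * k * Li <= m)%N then ps (m - 2 * k * Li)%N else 0)) ->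
  ordp p (k * O).
Proof.
move=> hk hOL hON hr0 hrO hIm hp; split.
  rewrite hp; last by rewrite ltn_pmul2l.
  rewrite dvdn_mulr // mulKn //.
  have [hlt|hge] := ltnP O (2 * Li).
    have -> : (2 * k * Li <= k * O)%N = false by nia.
    by rewrite addr0 addr0 oppr_eq0 fmorph_eq0 hrO.
  have hO : O = (2 * Li)%N by lia.
  rewrite (_ : (2 * k * Li <= k * O)%N = true); last nia.
  rewrite hO.
  rewrite subnn (_ : (k * (2 * Li) - 2 * k * Li = 0)%N); last nia.
  apply/eqP => h; move: (congr1 (@complex.Im R) h).
  move: hIm; case: (ps 0%N) => a b /= hb.
  by rewrite oppr0 add0r => hb0; move: hb; rewrite hb0 ltxx.
move=> m hm.
rewrite hp; last by nia.
have -> : (2 * k * Li <= m)%N = false by nia.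
case: ifP => hd; last by rewrite addr0.
have hmk : (m %/ k < O)%N by rewrite ltn_divLR // mulnC.
rewrite hr0 // (_ : (2 * Li <= m %/ k)%N = false); last lia.
by rewrite addr0 add0r rmorph0 oppr0.
Qed.

Lemma Im_pos (z : C) : 0 < 'Im z -> 0 < complex.Im z.
Proof. by rewrite -complexIm ltcE /= => /andP[_]. Qed.

End Aux3.

Unset Implicit Arguments.

Theorem corollary3p6 (R : realType) (P : {poly {poly R[i]}}) (M : nat)
  (k : nat) (u : nat -> nat -> R[i]) (L : 'I_M -> nat) (q : 'I_M -> {poly R})
  (psi : 'I_M -> nat -> R[i])
  (t : R) (ut : nat -> nat -> R[i]) (psit : 'I_M -> nat -> R) :
  (* P has no zeros in R x H *)
  (forall (x : R) (y : R[i]), 0 < Im y -> peval2 P (x%:C)%C y != 0) ->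
  (* P and Pbar have no common factor *)
  (forall Q, pdivides2 Q P -> pdivides2 Q (pconj2 P) -> pconst2 Q) ->
  (* M = Ord(P(0,y)) and the coefficient of y^M in P(0,y) is real *)
  (pat0 P)`_M != 0 -> (forall m, (m < M)%N -> (pat0 P)`_m = 0) ->
  (pat0 P)`_M \is Num.real ->
  (* local factorization P = u prod_j (y + q_j(x) + x^{2L_j} psi_j(x^{1/k})),
     written after substituting x = s^k, as an identity in C{s,y} *)
  (0 < k)%N -> conv2 u -> u 0%N 0%N != 0 ->
  (forall j, (q j).[0] = 0) ->
  (forall j, (size (q j) <= 2 * L j)%N) ->
  (forall j, conv1 (psi j)) ->
  (forall j, 0 < Im (psi j 0%N)) ->
  bsubst k (bser_of_poly P) =
    bmul (bsubst k u)
      (\big[@bmul R/@bone R]_(j < M)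
         bfactor (sadd (ssubst k (ser_of_poly (map_poly (fun a : R => (a%:C)%C) (q j))))
                       (sshift (2 * k * L j) (psi j)))) ->
  (* t is proper, with the factorization
     A + tB = u(x,y;t) prod_j (y + q_j(x) + x^{2L_j} psi_j(x;t)) *)
  conv2 ut -> ut 0%N 0%N != 0 ->
  (forall j, conv1R (psit j)) ->
  (forall i j, i != j ->
     ord_eq (sadd (ser_of_poly (map_poly (fun a : R => (a%:C)%C) (q j - q i)))
                  (sadd (sshift (2 * L j) (ser_of_real (psit j)))
                        (sopp (sshift (2 * L i) (ser_of_real (psit i))))))
            (Onum (q i) (q j) (L i) (L j))) ->
  bser_of_poly (Apart P + (t%:C)%C%:P%:P * Bpart P) =
    bmul ut (\big[@bmul R/@bone R]_(j < M)
         bfactor (sadd (ser_of_poly (map_poly (fun a : R => (a%:C)%C) (q j)))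
                       (sshift (2 * L j) (ser_of_real (psit j))))) ->
  (* conclusion *)
  forall j : 'I_M,
    let yj := sopp (sadd (ser_of_poly (map_poly (fun a : R => (a%:C)%C) (q j)))
                         (sshift (2 * L j) (ser_of_real (psit j)))) in
    [/\ ord_eq (peval_ser (Bpart P) yj) (\sum_(i < M) Onum (q i) (q j) (L i) (L j)),
        (\sum_(i < M) Onum (q i) (q j) (L i) (L j)
          = 2 * L j + \sum_(i < M | i != j) Onum (q i) (q j) (L i) (L j))%N
      & ord_eq (peval_ser ((Apart P)^`() + (t%:C)%C%:P%:P * (Bpart P)^`()) yj)
               (\sum_(i < M | i != j) Onum (q i) (q j) (L i) (L j))].
Proof.
move=> _ _ hM0 hMlow _ hk hu hu0 hq0 hqsz hpsic hpsiIm hPfac hut hut0 hpsitc hord hG j yj.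
pose cs i := sadd (ssubst k (ser_of_poly (map_poly (fun a : R => (a%:C)%C) (q i))))
                       (sshift (2 * k * L i) (psi i)).
pose cx i := cxf (q i) (L i) (psit i).
have hq0' : forall i, (q i)`_0 = 0 by move=> i; rewrite -horner_coef0 hq0.
have hL : (0 < L j)%N.
  pose N := M.+1.
  pose H := BT N (bsubst k u) * \prod_i ('X + (trunc N (cs i))%:P).
  have happ : approx N (bsubst k (bser_of_poly P)) H.
    rewrite hPfac; apply: approx_bmul; first exact: approx_BT.
    by apply: approx_big => i; apply: approx_bfactor.
  pose g := map_poly (horner_eval 0) H.
  have hg : forall n, (n < N)%N -> (pat0 P)`_n = g`_n.
    move=> n hn; rewrite /pat0 /g coef_map_id0; last by rewrite horner0.
    rewrite coef_map_id0; last by rewrite horner_evalE horner0.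
    rewrite horner_evalE !horner_coef0 -happ //.
    by rewrite /bsubst dvdn0 div0n.
  pose S0 := (\sum_(i < M) (cs i 0%N == 0%R : nat))%N.
  have hgo : ordp g (0 + S0).
    rewrite /g rmorphM rmorph_prod /=; apply: ordpM.
      split => [|m]; last by [].
      rewrite coef_map_id0; last by rewrite horner_evalE horner0.
      rewrite horner_evalE horner_coef0.
      move: (@approx_BT R N (bsubst k u) 0 0 (ltn0Sn _) (ltn0Sn _)) => <-.
      by rewrite /bsubst dvdn0 div0n.
    rewrite /S0; apply: ordp_prod => i _.
    rewrite rmorphD /= map_polyX map_polyC /= horner_evalE horner_coef0 coef_poly /=.
    exact: ordpXc.
  have hS0M : (M <= S0)%N.
    rewrite leqNgt; apply/negP => hlt.
    case: hgo => hne _; move: hne; rewrite add0n -hg; last by rewrite /N; lia.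
    by rewrite hMlow ?eqxx.
  rewrite lt0n; apply/negP => /eqP hL0.
  have hcs : (cs j 0%N == 0) = false.
    rewrite /cs /sadd /ssubst /sshift /ser_of_poly dvdn0 div0n hemb hq0' rmorph0 add0r.
    rewrite hL0 muln0 leqnn subnn.
    apply/negP => /eqP h; move: (Im_pos (hpsiIm j)); rewrite h ltxx.
    by [].
  move: hS0M; rewrite /S0 (bigD1 j) //= hcs add0n.
  have : (\sum_(i < M | i != j) (cs i 0%N == 0%R : nat) <= \sum_(i < M | i != j) 1)%N.
    by apply: leq_sum => i _; case: eqP.
  rewrite sum1_card cardC1 card_ord.
  move=> h1 h2; have := leq_trans h2 h1; move: (ltn_ord j); lia.
have hyj0 : yj 0%N = 0.
  rewrite /yj /sopp /sadd /sshift /ser_of_poly hemb hq0'.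
  by rewrite (_ : (2 * L j <= 0)%N = false) ?rmorph0 ?addr0 ?oppr0 //; lia.
pose O i := Onum (q i) (q j) (L i) (L j).
have hOjj : O j = (2 * L j)%N by rewrite /O /Onum subrr eqxx minnn.
have hOle : forall i, (O i <= 2 * L i)%N.
  by move=> i; rewrite /O /Onum; case: ifP => _; lia.
pose r i := rr (q i) (q j) (L i) (L j) (psit i) (psit j).
have hrr : forall i, i != j -> (forall a, (a < O i)%N -> r i a = 0) /\ r i (O i) != 0.
  move=> i hij; case: (hord i j hij) => h1 h2; split.
    move=> a ha; move: (h2 a ha); rewrite series_r => /eqP.
    by rewrite fmorph_eq0 => /eqP.
  by move: h1; rewrite series_r fmorph_eq0.
pose G := Apart P + (t%:C)%C%:P%:P * Bpart P.
pose F N i := ('X + (trunc N (cx i))%:P) : {poly {poly R[i]}}.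
have appG : forall N, approx N (bser_of_poly G) (BT N ut * \prod_i F N i).
  move=> N; rewrite /G hG; apply: approx_bmul; first exact: approx_BT.
  by apply: approx_big => i; apply: approx_bfactor.
have hY0 : forall N, (0 < N)%N -> (trunc N yj)`_0 = 0.
  by move=> N1 hN; rewrite coef_poly hN.
have hFj : forall N, (F N j).[trunc N yj] = 0.
  move=> N; rewrite /F hornerD hornerX hornerC; apply/polyP => m.
  rewrite coefD !coef_poly coef0; case: ifP => _; last by rewrite addr0.
  by rewrite /yj /sopp /cx /cxf addNr.
have hsplit : forall N, BT N ut * \prod_i F N i = F N j * (BT N ut * \prod_(i | i != j) F N i).
  by move=> N; rewrite (bigD1 j) //= mulrCA.
have hBT0 : forall N (a : nat -> nat -> R[i]) (Y : {poly R[i]}), (0 < N)%N -> Y`_0 = 0 -> a 0%N 0%N != 0 ->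
    ordp (BT N a).[Y] 0.
  move=> N a Y hN hY ha; split => [|m] //.
  by rewrite eval_coef0 // -approx_BT.
have hFi : forall N i, i != j -> (O i < N)%N -> ordp (F N i).[trunc N yj] (O i).
  move=> N i hij hON; case: (hrr i hij) => h1 h2.
  have hc : forall m, (m < N)%N -> ((F N i).[trunc N yj])`_m = - ((r i m)%:C)%C.
    move=> m hm; rewrite /F hornerD hornerX hornerC coefD !coef_poly hm.
    by rewrite /r -cx_r /yj /sopp /cx opprB addrC.
  split; first by rewrite hc // oppr_eq0 fmorph_eq0.
  by move=> m hm; rewrite hc ?h1 ?rmorph0 ?oppr0 //; lia.
have hT : (\sum_(i < M) O i)%N = (2 * L j + \sum_(i < M | i != j) O i)%N.
  by rewrite (bigD1 j) //= hOjj.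
split.
- change (ord_eq (peval_ser (Bpart P) yj) (\sum_(i < M) O i)%N).
  set T := (\sum_(i < M) O i)%N.
  pose N0 := T.+1.
  pose Y := trunc N0 yj.
  have hOT : forall i, (O i < N0)%N.
    by move=> i; rewrite /N0 /T (bigD1 i) //=; lia.
  have hGY : forall m, (m < N0)%N -> (G.[Y])`_m = 0.
    move=> m hm; rewrite (@eval_agree R N0 G (BT N0 ut * \prod_i F N0 i)) //.
    - by rewrite hsplit hornerM hFj mul0r coef0.
    - by move=> m' n hm' hn; rewrite -appG.
    - exact: hY0.
  have hit : ('i%C - (t%:C)%C : R[i]) != 0.
    apply/eqP => /(congr1 (@complex.Im R)) /=; rewrite subr0 => /eqP.
    by rewrite oner_eq0.
  have hPB : forall m, (m < N0)%N -> (P.[Y])`_m = ('i%C - (t%:C)%C) * ((Bpart P).[Y])`_m.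
    move=> m hm; have := hGY m hm; have := PAB P; rewrite /G.
    move: (Apart P) (Bpart P) => A B hAB.
    rewrite -hAB !hornerD !hornerCM !coefD !coefCM => h.
    have -> : (A.[Y])`_m = - ((t%:C)%C * (B.[Y])`_m).
      by apply/eqP; rewrite -addr_eq0 h.
    ring.
  pose Ns := (k * N0)%N.
  pose Ys := Y \Po 'X^k.
  pose Ps := map_poly (fun c => c \Po 'X^k) P.
  pose Fs i := ('X + (trunc Ns (cs i))%:P) : {poly {poly R[i]}}.
  pose Hs := BT Ns (bsubst k u) * \prod_i Fs i.
  have happ : approx Ns (bsubst k (bser_of_poly P)) Hs.
    rewrite hPfac; apply: approx_bmul; first exact: approx_BT.
    by apply: approx_big => i; apply: approx_bfactor.
  have hYs0 : Ys`_0 = 0.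
    by rewrite coef_comp_poly_Xn // dvdn0 div0n /Y coef_poly.
  have hPs : forall m, (m < Ns)%N -> (Ps.[Ys])`_m = (Hs.[Ys])`_m.
    apply: eval_agree => // m n hm hn.
    rewrite -happ // coef_map_id0; last by rewrite comp_poly0.
    by rewrite coef_comp_poly_Xn.
  have hFs : forall i, ordp (Fs i).[Ys] (k * O i).
    move=> i.
    apply: (@key_s R k N0 (O i) (L i) _ (r i) (psit i) (psi i)) => //.
    - move=> a ha; have [->|hij] := eqVneq i j; first by rewrite /r rr_jj.
      by case: (hrr i hij) => h _; apply: h.
    - move=> hlt; have [hij|hij] := eqVneq i j.
        by move: hlt; rewrite hij hOjj ltnn.
      by case: (hrr i hij).
    - exact: Im_pos.
    move=> m hm; rewrite /Fs hornerD hornerX hornerC coefD /Ys.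
    have hm' : (m < Ns)%N := hm.
    rewrite coef_comp_poly_Xn // [X in _ + X]coef_poly hm'.
    rewrite /cs /sadd /ssubst /sshift.
    have [hd|hd] := boolP (k %| m)%N; last by rewrite !add0r.
    have hmk : (m %/ k < N0)%N by rewrite ltn_divLR // mulnC.
    rewrite /Y coef_poly hmk addrA; congr (_ + _).
    have hcx := cx_r (q i) (q j) (L i) (L j) (psit i) (psit j) (m %/ k).
    rewrite /cxf /sadd /sshift /ser_of_real /ser_of_poly in hcx.
    rewrite /yj /sopp /sadd /sshift /ser_of_real /ser_of_poly /r.
    set rv := rr _ _ _ _ _ _ _ in hcx *.
    rewrite rmorphD /= -hcx; case: ifP => _; case: ifP => _; rewrite ?rmorph0; ring.
  have hHs : ordp Hs.[Ys] (k * T).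
    suff : ordp Hs.[Ys] (0 + k * T) by [].
    rewrite /Hs hornerM horner_prod; apply: ordpM.
      apply: hBT0 => //; first by rewrite /Ns /N0 muln_gt0 hk.
      by rewrite /bsubst dvdn0 div0n.
    rewrite /T big_distrr /=; apply: ordp_prod => i _; exact: hFs.
  have hPso : ordp (P.[Y] \Po 'X^k) (k * T).
    rewrite -comp_eval -/Ps -/Ys.
    apply: (@ordp_eq R Ns Hs.[Ys]) => //.
      by rewrite /Ns ltn_pmul2l.
    by move=> m hm; rewrite hPs.
  have hPo := ordp_comp hk hPso.
  case: hPo => h1 h2.
  have hBo : ordp ((Bpart P).[Y]) T.
    split.
      by move: h1; rewrite hPB // mulf_eq0 negb_or => /andP[].
    move=> m hm; move: (h2 m hm); rewrite hPB; last by lia.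
    by move/eqP; rewrite mulf_eq0 (negbTE hit) /= => /eqP.
  case: hBo => h3 h4; split.
    by rewrite (@peval_eval R N0).
  by move=> m hm; rewrite (@peval_eval R N0) ?h4 //; lia.
- exact: hT.
- change (ord_eq (peval_ser ((Apart P)^`() + (t%:C)%C%:P%:P * (Bpart P)^`()) yj)
          (\sum_(i < M | i != j) O i)%N).
  set S := (\sum_(i < M | i != j) O i)%N.
  pose N := S.+2.
  pose Y := trunc N yj.
  pose W := BT N ut * \prod_(i | i != j) F N i.
  have hD : (Apart P)^`() + (t%:C)%C%:P%:P * (Bpart P)^`() = G^`().
    by rewrite /G derivD (derivM ((t%:C)%C%:P%:P)) derivC mul0r add0r.
  have hag : forall m, (m < S.+1)%N -> (G^`().[Y])`_m = (W.[Y])`_m.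
    move=> m hm.
    have -> : W.[Y] = ((BT N ut * \prod_i F N i)^`()).[Y].
      rewrite /Y hsplit (derivM (F N j)) hornerD [X in _ = _ + X]hornerM hFj mul0r addr0.
      have -> : (F N j)^`() = 1 by rewrite /F derivD derivX derivC addr0.
      by rewrite mul1r.
    apply: (@eval_agree R S.+1) => //; last exact: hY0.
    move=> m' n hm' hn; rewrite !coef_deriv !coefMn.
    by rewrite -!appG //; lia.
  have hWo : ordp W.[Y] (0 + S).
    rewrite hornerM horner_prod; apply: ordpM.
      by apply: hBT0 => //; exact: hY0.
    apply: ordp_prod => i hij; apply: hFi => //.
    rewrite /N /S (bigD1 i) //=; lia.
  have hDo : ordp (G^`().[Y]) S.
    apply: (@ordp_eq R S.+1 W.[Y]) => //.
    by move=> m hm; rewrite hag.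
  rewrite hD; case: hDo => h1 h2; split.
    by rewrite (@peval_eval R N).
  by move=> m hm; rewrite (@peval_eval R N) ?h2 //; lia.
Qed.
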